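(* Let $g$ be a smooth metric of revolution on $S^2$, i.e. on the complement of two points (the poles) there are coordinates $(r,\phi)\in(0,R)\times\mathbb{R}/2\pi\mathbb{Z}$ with $g=\mathrm{d}r^2+a(r)^2\mathrm{d}\phi^2$ for a function $a:[0,R]\to[0,\infty)$ (positive on $(0,R)$, with $r=0$ and $r=R$ corresponding to the two poles), and assume that the Gaussian curvature $K$ of $g$ is non-constant. Let $\mu$ be the area form of $g$. Then $K$ does not induce a Hamiltonian circle action on $(S^2,\mu)$, i.e. there is no $T>0$ such that the time-$T$ map of the Hamiltonian flow of $K$ on $(S^2,\mu)$ is the identity.
   Context: The Hamiltonian flow of $K$ on $(S^2,\mu)$ is the flow of the vector field $X_K$ defined by $\mu(X_K,\cdot)=-\mathrm{d}K$. *)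

(* Defs.v *)
From Stdlib Require Import Reals Lra.
From Coquelicot Require Import Coquelicot.
Open Scope R_scope.

(* In polar coordinates (r, phi) in (0,Rm) x R/2piZ on S^2 minus the   *)
(* two poles, g = dr^2 + a(r)^2 dphi^2.  The metric extends smoothly   *)
(* over the poles r = 0 and r = Rm iff a : [0,Rm] -> [0,oo) is the     *)
(* restriction of a smooth function that is odd about 0 and odd about  *)
(* Rm (equivalently: all even derivatives of a vanish at 0 and Rm),    *)
(* with a'(0) = 1, a'(Rm) = -1, and a > 0 on (0,Rm).  We encode a by   *)
(* its (unique) smooth extension to all of R obtained by the odd       *)
(* reflections.                                                        *)

Definition smooth (f : R -> R) : Prop :=
  forall (n : nat) (x : R), ex_derive (Derive_n f n) x.

Definition metric_of_revolution (Rm : R) (a : R -> R) : Prop :=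
  0 < Rm /\
  smooth a /\
  (forall r, a (- r) = - a r) /\
  (forall s, a (Rm + s) = - a (Rm - s)) /\
  (forall r, 0 < r < Rm -> 0 < a r) /\
  Derive a 0 = 1 /\
  Derive a Rm = -1.

(* Points of the open cylinder S^2 \ {poles}, in coordinates (r, phi);
   phi is taken in R and read modulo 2*PI. *)
Definition in_cyl (Rm : R) (p : R * R) : Prop := 0 < fst p < Rm.

Definition gauss_curv (a : R -> R) (p : R * R) : R :=
  - Derive_n a 2 (fst p) / a (fst p).

Definition d_r (H : R * R -> R) (p : R * R) : R :=
  Derive (fun r => H (r, snd p)) (fst p).
Definition d_phi (H : R * R -> R) (p : R * R) : R :=
  Derive (fun ph => H (fst p, ph)) (snd p).
Definition dfun (H : R * R -> R) (p : R * R) (v : R * R) : R :=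
  d_r H p * fst v + d_phi H p * snd v.

Definition area_form (a : R -> R) (p : R * R) (u v : R * R) : R :=
  a (fst p) * (fst u * snd v - snd u * fst v).

Definition is_ham_field (Rm : R) (a : R -> R) (H : R * R -> R)
  (X : R * R -> R * R) : Prop :=
  forall p v, in_cyl Rm p -> area_form a p (X p) v = - dfun H p v.

Definition is_flow (Rm : R) (X : R * R -> R * R)
  (Phi : R -> R * R -> R * R) : Prop :=
  forall p, in_cyl Rm p ->
    Phi 0 p = p /\
    forall t, in_cyl Rm (Phi t p) /\
      is_derive (fun s => fst (Phi s p)) t (fst (X (Phi t p))) /\
      is_derive (fun s => snd (Phi s p)) t (snd (X (Phi t p))).

Definition time_map_is_id (Rm : R) (Phi : R -> R * R -> R * R) (T : R) : Prop :=
  forall p, in_cyl Rm p ->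
    fst (Phi T p) = fst p /\
    exists k : Z, snd (Phi T p) = snd p + 2 * PI * IZR k.

(* Main.v *)
Require Import Defs.
From Stdlib Require Import Reals Lra Lia.
From Coquelicot Require Import Coquelicot.
Open Scope R_scope.

Definition kf (a : R -> R) (r : R) : R := - Derive_n a 2 r / a r.
Definition Gc (a : R -> R) (r : R) : R :=
  (Derive a r * Derive_n a 2 r - Derive_n a 3 r * a r) / (a r)^3.

Lemma kf_deriv (a : R -> R) r : smooth a -> a r <> 0 ->
  is_derive (kf a) r (Gc a r * a r).
Proof.
  intros Hs Ha. unfold kf, Gc.
  auto_derive.
  - repeat split; try exact (Hs 0%nat r); try exact (Hs 1%nat r); try exact (Hs 2%nat r); exact Ha.
  - change (Derive (fun x => Derive (fun x0 => Derive (fun x1 => a x1) x0) x) r)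
      with (Derive_n a 3 r).
    change (Derive (fun x0 => Derive (fun x1 => a x1) x0) r) with (Derive_n a 2 r).
    change (Derive (fun x1 => a x1) r) with (Derive a r).
    field. exact Ha.
Qed.

Lemma Gc_cont (a : R -> R) r : smooth a -> a r <> 0 -> continuity_pt (Gc a) r.
Proof.
  intros Hs Ha.
  apply continuity_pt_filterlim. apply (ex_derive_continuous (V := R_NormedModule) (Gc a) r).
  unfold Gc. auto_derive.
  repeat split; try exact (Hs 0%nat r); try exact (Hs 1%nat r); try exact (Hs 2%nat r); try exact (Hs 3%nat r).
  intro H. apply Ha. assert (H0 : a r ^ 3 <> 0) by (apply pow_nonzero; exact Ha).
  simpl in H0. exfalso. exact (H0 H).
Qed.

Lemma lattice_aux (f : R -> R) (T lo hi : R) : 0 < T ->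
  (forall x, lo < x < hi -> continuity_pt f x) ->
  (forall x, lo < x < hi -> exists m, T * f x = 2 * PI * IZR m) ->
  forall x y, lo < x < hi -> lo < y < hi -> x < y -> f x < f y -> False.
Proof.
  intros HT Hc Hl x y Hx Hy Hxy Hf.
  destruct (Hl x Hx) as [m1 H1]. destruct (Hl y Hy) as [m2 H2].
  assert (HPI := PI_RGT_0).
  assert (Hm : IZR m1 < IZR m2).
  { apply (Rmult_lt_reg_l (2 * PI)); [lra|].
    rewrite <- H1, <- H2. apply Rmult_lt_compat_l; lra. }
  apply lt_IZR in Hm.
  assert (Hm' : IZR m1 + 1 <= IZR m2).
  { rewrite <- plus_IZR. apply IZR_le. lia. }
  set (v := f x + PI / T).
  assert (Hfy : v < f y).
  { assert (T * f y >= T * f x + 2 * PI) by nra.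
    unfold v. apply (Rmult_lt_reg_l T); [lra|].
    replace (T * (f x + PI / T)) with (T * f x + PI) by (field; lra). lra. }
  assert (Hfx : f x < v).
  { unfold v. assert (0 < PI / T) by (apply Rdiv_lt_0_compat; lra). lra. }
  destruct (Ranalysis5.IVT_interv (fun z => f z - v) x y) as [z [Hz Hfz]].
  - intros b Hb.
    apply (continuity_pt_minus f (fun _ => v)).
    + apply Hc. lra.
    + apply continuity_pt_const. intros u w. reflexivity.
  - exact Hxy.
  - lra.
  - lra.
  - destruct (Hl z ltac:(lra)) as [m Hm3].
    assert (Hv : f z = v) by lra.
    rewrite Hv in Hm3. unfold v in Hm3.
    replace (T * (f x + PI / T)) with (T * f x + PI) in Hm3 by (field; lra).
    rewrite H1 in Hm3.
    assert (Heq : 2 * IZR m1 + 1 = 2 * IZR m).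
    { apply (Rmult_eq_reg_l PI); [|lra]. lra. }
    replace (2 * IZR m1 + 1) with (IZR (2 * m1 + 1)) in Heq
      by (rewrite plus_IZR, mult_IZR; reflexivity).
    replace (2 * IZR m) with (IZR (2 * m)) in Heq by (rewrite mult_IZR; reflexivity).
    apply eq_IZR in Heq. lia.
Qed.

Lemma lattice_const (f : R -> R) (T lo hi : R) : 0 < T ->
  (forall x, lo < x < hi -> continuity_pt f x) ->
  (forall x, lo < x < hi -> exists m, T * f x = 2 * PI * IZR m) ->
  forall x y, lo < x < hi -> lo < y < hi -> f x = f y.
Proof.
  intros HT Hc Hl.
  assert (Hl' : forall x, lo < x < hi -> exists m, T * (fun z => - f z) x = 2 * PI * IZR m).
  { intros x Hx. destruct (Hl x Hx) as [m Hm]. exists (- m)%Z.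
    rewrite opp_IZR. simpl. lra. }
  assert (Hc' : forall x, lo < x < hi -> continuity_pt (fun z => - f z) x).
  { intros x Hx. apply (continuity_pt_opp f). auto. }
  assert (W : forall x y, lo < x < hi -> lo < y < hi -> x < y -> f x = f y).
  { intros x y Hx Hy Hxy.
    destruct (Rtotal_order (f x) (f y)) as [H|[H|H]]; auto.
    - exfalso. exact (lattice_aux f T lo hi HT Hc Hl x y Hx Hy Hxy H).
    - exfalso. apply (lattice_aux (fun z => - f z) T lo hi HT Hc' Hl' x y Hx Hy Hxy).
      lra. }
  intros x y Hx Hy.
  destruct (Rtotal_order x y) as [H|[H|H]].
  - auto.
  - subst; reflexivity.
  - symmetry; auto.
Qed.

Lemma deriv_const_diff (f : R -> R) (C a b : R) : a < b ->
  (forall t, a <= t <= b -> is_derive f t C) -> f b - f a = C * (b - a).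
Proof.
  intros Hab Hd.
  destruct (MVT_cor2 f (fun _ => C) a b Hab) as [c [Hc _]].
  - intros c Hc. apply is_derive_Reals. auto.
  - exact Hc.
Qed.

Theorem theorem5p1 (Rm : R) (a : R -> R) :
  metric_of_revolution Rm a ->
  (exists p q, in_cyl Rm p /\ in_cyl Rm q /\ gauss_curv a p <> gauss_curv a q) ->
  ~ (exists (T : R) (X : R * R -> R * R) (Phi : R -> R * R -> R * R),
       0 < T /\ is_ham_field Rm a (gauss_curv a) X /\
       is_flow Rm X Phi /\ time_map_is_id Rm Phi T).
Proof.
  intros [HR [Hs [Hodd [Hodd2 [Hpos [Hd0 HdR]]]]]] [p [q [Hp [Hq Hpq]]]]
    [T [X [Phi [HT [HX [HF Hid]]]]]].
  assert (a0 : a 0 = 0).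
  { pose proof (Hodd 0) as H. rewrite Ropp_0 in H. lra. }
  assert (aR : a Rm = 0).
  { pose proof (Hodd2 0) as H. rewrite Rplus_0_r, Rminus_0_r in H. lra. }
  assert (Hne : forall r, 0 < r < Rm -> a r <> 0).
  { intros r Hr. specialize (Hpos r Hr). lra. }
  assert (HXf : forall q, in_cyl Rm q ->
            fst (X q) = 0 /\ snd (X q) = Gc a (fst q)).
  { intros q0 Hq0.
    assert (dphi : d_phi (gauss_curv a) q0 = 0).
    { unfold d_phi. change (Derive (fun _ => kf a (fst q0)) (snd q0) = 0).
      apply Derive_const. }
    assert (dr : d_r (gauss_curv a) q0 = Gc a (fst q0) * a (fst q0)).
    { unfold d_r. change (Derive (kf a) (fst q0) = Gc a (fst q0) * a (fst q0)).
      apply is_derive_unique. apply kf_deriv; auto. }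
    pose proof (HX q0 (0,1) Hq0) as h1. pose proof (HX q0 (1,0) Hq0) as h2.
    unfold area_form, dfun in h1, h2. rewrite dphi, dr in h1, h2. simpl in h1, h2.
    pose proof (Hne _ Hq0) as Ha.
    split.
    - assert (a (fst q0) * fst (X q0) = 0) by lra.
      apply Rmult_integral in H. destruct H; [contradiction|assumption].
    - apply (Rmult_eq_reg_l (a (fst q0))); [|exact Ha]. lra. }
  assert (Hlat : forall r, 0 < r < Rm -> exists m, T * Gc a r = 2 * PI * IZR m).
  { intros r Hr. set (p0 := (r, 0)).
    assert (Hp0 : in_cyl Rm p0) by (unfold in_cyl; simpl; exact Hr).
    destruct (HF p0 Hp0) as [H0 Hall].
    assert (Hfst : forall t, 0 <= t <= T -> fst (Phi t p0) = r).
    { intros t Ht. destruct (Req_dec t 0) as [->|Ht0].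
      - rewrite H0. reflexivity.
      - assert (E := deriv_const_diff (fun s => fst (Phi s p0)) 0 0 t ltac:(lra)).
        simpl in E. rewrite H0 in E. simpl in E.
        assert (fst (Phi t p0) - r = 0 * (t - 0)).
        { apply E. intros u Hu. destruct (Hall u) as [Hc [Hd1 _]].
          destruct (HXf _ Hc) as [Hx1 _]. rewrite <- Hx1. exact Hd1. }
        lra. }
    assert (E := deriv_const_diff (fun s => snd (Phi s p0)) (Gc a r) 0 T HT).
    simpl in E. rewrite H0 in E. simpl in E.
    destruct (Hid p0 Hp0) as [_ [m Hm]]. exists m. simpl in Hm.
    assert (snd (Phi T p0) - 0 = Gc a r * (T - 0)).
    { apply E. intros u Hu. destruct (Hall u) as [Hc [_ Hd2]].
      destruct (HXf _ Hc) as [_ Hx2]. rewrite Hx2, Hfst in Hd2 by exact Hu.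
      exact Hd2. }
    lra. }
  assert (Hconst : forall x y, 0 < x < Rm -> 0 < y < Rm -> Gc a x = Gc a y).
  { apply (lattice_const (Gc a) T 0 Rm HT); auto.
    intros x Hx. apply Gc_cont; auto. }
  set (c := Gc a (fst p)).
  destruct (Req_dec c 0) as [Hc0|Hc0].
  - assert (Hk : forall x y, 0 < x < Rm -> 0 < y < Rm -> x < y -> kf a x = kf a y).
    { intros x y Hx Hy Hxy.
      assert (E := deriv_const_diff (kf a) 0 x y Hxy).
      assert (kf a y - kf a x = 0 * (y - x)).
      { apply E. intros t Ht.
        assert (Htr : 0 < t < Rm) by lra.
        assert (Hg : Gc a t = 0) by (rewrite <- Hc0; unfold c; apply Hconst; auto).
        replace 0 with (Gc a t * a t) by (rewrite Hg; ring).
        apply kf_deriv; auto. }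
      lra. }
    apply Hpq. change (kf a (fst p) = kf a (fst q)).
    destruct (Rtotal_order (fst p) (fst q)) as [H|[H|H]].
    + apply Hk; auto.
    + rewrite H; reflexivity.
    + symmetry; apply Hk; auto.
  - set (F := fun x => Derive a x ^ 2 - Derive_n a 2 x * a x).
    set (dF := fun x => 2 * Derive a x * Derive_n a 2 x -
                        (Derive_n a 3 x * a x + Derive_n a 2 x * Derive a x)).
    assert (HFd : forall x, is_derive F x (dF x)).
    { intros x. unfold F, dF. auto_derive.
      - repeat split; first [exact (Hs 0%nat x) | exact (Hs 1%nat x) | exact (Hs 2%nat x)].
      - change (Derive (fun x => Derive (fun x0 => Derive (fun x1 => a x1) x0) x) x)
          with (Derive_n a 3 x).
        change (Derive (fun x0 => Derive (fun x1 => a x1) x0) x) with (Derive_n a 2 x).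
        change (Derive (fun x1 => a x1) x) with (Derive a x).
        change (Derive (fun x : R => Derive a x) x) with (Derive_n a 2 x). ring. }
    destruct (MVT_cor2 F dF 0 Rm HR) as [xi [Hxi Hxir]].
    { intros t _. apply is_derive_Reals. apply HFd. }
    assert (HF0 : F 0 = 1) by (unfold F; rewrite Hd0, a0; ring).
    assert (HFR : F Rm = 1) by (unfold F; rewrite HdR, aR; ring).
    assert (Hdxi : dF xi = c * a xi ^ 3).
    { unfold c. rewrite (Hconst (fst p) xi Hp Hxir). unfold dF, Gc.
      field. apply Hne; auto. }
    rewrite HF0, HFR, Hdxi in Hxi.
    assert (0 < a xi ^ 3) by (apply pow_lt; apply Hpos; auto).
    assert (c * (a xi ^ 3 * Rm) = 0) by lra.
    apply Rmult_integral in H0. destruct H0 as [H0|H0]; [contradiction|].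
    assert (0 < a xi ^ 3 * Rm) by (apply Rmult_lt_0_compat; lra). lra.
Qed.
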